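(* Let $Y$ be a topological quandle with the underlying set and quandle operation described below, but with the indiscrete topology. Then $\bar{H}^{1}_{Q}(Y)=\mathbb{Z}^{2}$.
   Context: Setting: For a topological quandle $X$, $C_n(X)$ is the free abelian group generated by the singular $n$-simplices $\sigma:\Delta^n\to X$. We write $\sigma_{[x_1,\dots,x_{n+1}]}$ for a simplex whose $i$-th vertex maps to $x_i$. The boundary map is $\partial_n(\sigma_{[x_1,\dots,x_{n+1}]})=\sum_{i=2}^{n+1}(-1)^i(\sigma_{[x_1,\dots,\hat{x_i},\dots,x_{n+1}]}-\sigma_{[x_1\triangleright x_i,\dots,x_{i-1}\triangleright x_i,\hat{x_i},\dots,x_{n+1}]})$. $\bar{C}^R_n(X)$ is the quotient of $C_n(X)$ that identifies two $n$-simplices whenever they have the same vertices. $\bar{C}^D_n(X)$ is the subcomplex generated by the simplices $\sigma_{[x_1,\dots,x_{n+1}]}$ with $x_i=x_{i+1}$ for some $i$, for $n\ge1$; it is $0$ for $n=0$. Then $\bar{C}^Q_n(X)=\bar{C}^R_n(X)/\bar{C}^D_n(X)$. The group $\bar{H}^n_Q(X)$ is the $n$-th cohomology of $\mathrm{Hom}(\bar{C}^Q_*(X),\mathbb{Z})$. The underlying quandle is $\{1,2,3\}$ with - $1\triangleright j=1$ for all $j$, - $2\triangleright1=3$, $2\triangleright2=2$, $2\triangleright3=2$, - $3\triangleright1=2$, $3\triangleright2=3$, $3\triangleright3=3$. This is the operation table $M$ with rows $(1,1,1),(3,2,2),(2,3,3)$. *)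

(* Defs.v *)
From HB Require Import structures.
From mathcomp Require Import all_boot all_order all_algebra.
From mathcomp Require Import all_classical all_reals all_analysis.
From mathcomp Require Import Rstruct Rstruct_topology.

Unset Printing Implicit Defensive.

Import Order.TTheory GRing.Theory Num.Theory.
Local Open Scope classical_set_scope.
Local Open Scope ring_scope.

(* Elements 1,2,3 of the paper are encoded as the ordinals 0,1,2 of 'I_3.   *)
Notation QY := 'I_3 (only parsing).

(* operation table M with rows (1,1,1),(3,2,2),(2,3,3); (x |> y) = M[x][y] *)
Definition qop (x y : QY) : QY :=
  match nat_of_ord x, nat_of_ord y with
  | 0, _ => inord 0
  | 1, 0 => inord 2
  | 1, _ => inord 1
  | _, 0 => inord 1
  | _, _ => inord 2
  end.

Definition indiscrete_open (Y : Type) : set (set Y) :=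
  [set U | U = set0 \/ U = setT].

Definition std_simplex (n : nat) : set 'rV[Rdefinitions.R]_n.+1 :=
  [set v | (forall j, 0 <= v ord0 j) /\ \sum_j v ord0 j = 1].
Arguments std_simplex n : clear implicits.

Definition vertex {n : nat} (i : 'I_n.+1) : 'rV[Rdefinitions.R]_n.+1 :=
  \row_j (i == j)%:R.

Definition simplex_open (n : nat) (A : set 'rV[Rdefinitions.R]_n.+1) : Prop :=
  exists V : set 'rV[Rdefinitions.R]_n.+1, open V /\ std_simplex n `&` A = std_simplex n `&` V.
Arguments simplex_open n A : clear implicits.

(* sigma (only its restriction to Delta^n matters) is a continuous map
   Delta^n -> Y, where Y carries the topology whose open sets are openY. *)
Definition singular_simplex {Y : Type} (openY : set (set Y)) (n : nat)
    (sigma : 'rV[Rdefinitions.R]_n.+1 -> Y) : Prop :=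
  forall U, openY U -> simplex_open n (sigma @^-1` U).

(* A vertex tuple (x_1,...,x_{n+1}) is the vertex tuple of some singular
   n-simplex sigma_[x_1,...,x_{n+1}]; such tuples index a basis of C^R_n. *)
Definition realizable {Y : Type} (openY : set (set Y)) {n : nat}
    (t : {ffun 'I_n.+1 -> Y}) : Prop :=
  exists sigma, singular_simplex openY n sigma /\ forall i, sigma (vertex i) = t i.

(* degenerate: x_i = x_{i+1} for some i (the generators of C^D_n; none for n=0) *)
Definition degenerate {Y : eqType} {n : nat} (t : {ffun 'I_n.+1 -> Y}) : Prop :=
  exists i j : 'I_n.+1, (nat_of_ord j = (nat_of_ord i).+1)%N /\ t i = t j.

Section Complex.
Variables (Y : finType) (op : Y -> Y -> Y).

Definition face {n : nat} (k : 'I_n.+2) (t : {ffun 'I_n.+2 -> Y}) :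
    {ffun 'I_n.+1 -> Y} := [ffun j => t (lift k j)].

Definition tface {n : nat} (k : 'I_n.+2) (t : {ffun 'I_n.+2 -> Y}) :
    {ffun 'I_n.+1 -> Y} :=
  [ffun j => if (nat_of_ord j < nat_of_ord k)%N then op (t (lift k j)) (t k)
             else t (lift k j)].

(* (delta f)(sigma) = f(partial sigma), with (0-based k = i-1)
   partial sigma = sum_{i=2}^{n+2} (-1)^i (d_i sigma - d'_i sigma). *)
Definition cobound {n : nat} (f : {ffun 'I_n.+1 -> Y} -> int)
    (t : {ffun 'I_n.+2 -> Y}) : int :=
  \sum_(k : 'I_n.+2 | k != ord0)
     (-1) ^+ (nat_of_ord k).+1 * (f (face k t) - f (tface k t)).

Variable openY : set (set Y).

(* An n-cochain of the normalized complex Hom(C^Q_n(Y), Z): an integer-valued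
   function on the basis of C^R_n (realizable vertex tuples) vanishing on
   C^D_n; by convention it is 0 on non-realizable tuples. *)
Definition cochainQ (n : nat) (f : {ffun 'I_n.+1 -> Y} -> int) : Prop :=
  forall t, (~ realizable openY t \/ degenerate t) -> f t = 0.

Definition cocycleQ (n : nat) (f : {ffun 'I_n.+1 -> Y} -> int) : Prop :=
  cochainQ n f /\ forall t : {ffun 'I_n.+2 -> Y}, realizable openY t ->
     cobound f t = 0.

Definition coboundaryQ (n : nat) (f : {ffun 'I_n.+2 -> Y} -> int) : Prop :=
  exists g : {ffun 'I_n.+1 -> Y} -> int, cochainQ n g /\
    forall t : {ffun 'I_n.+2 -> Y}, realizable openY t -> f t = cobound g t.

(* H^{n+1}_Q = Z^{n+1}/B^{n+1} is isomorphic to Z^2 : there is a map from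
   (n+1)-cocycles onto Z x Z, additive on cocycles, whose kernel on the
   cocycles is exactly the coboundaries. *)
Definition H_Q_iso_Z2 (n : nat) : Prop :=
  exists phi : ({ffun 'I_n.+2 -> Y} -> int) -> (int * int)%type,
    (forall f g, cocycleQ n.+1 f -> cocycleQ n.+1 g ->
        phi (fun t => f t + g t) = phi f + phi g) /\
    (forall z, exists f, cocycleQ n.+1 f /\ phi f = z) /\
    (forall f, cocycleQ n.+1 f -> (phi f = 0 <-> coboundaryQ n f)).

End Complex.

(* Main.v *)
Require Import Defs.
From mathcomp Require Import all_boot all_order all_algebra.
From mathcomp Require Import all_classical all_reals all_analysis.
From mathcomp Require Import Rstruct Rstruct_topology.
From mathcomp Require Import ring lra zify.
Import GRing.Theory Num.Theory.
Local Open Scope ring_scope.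

Definition o0 : 'I_3 := @Ordinal 3 0 isT.
Definition o1 : 'I_3 := @Ordinal 3 1 isT.
Definition o2 : 'I_3 := @Ordinal 3 2 isT.
Definition T1 (x : 'I_3) : {ffun 'I_1 -> 'I_3} := [ffun=> x].
Definition T2 (x y : 'I_3) : {ffun 'I_2 -> 'I_3} :=
  [ffun i => if nat_of_ord i == 0%N then x else y].
Definition T3 (x y z : 'I_3) : {ffun 'I_3 -> 'I_3} :=
  [ffun i => if nat_of_ord i == 0%N then x else if nat_of_ord i == 1%N then y else z].

Lemma I3cases (x : 'I_3) : x = o0 \/ x = o1 \/ x = o2.
Proof.
case: x => [[|[|[|m]]] H]; [left|right;left|right;right|by []]; exact: val_inj.
Qed.

Lemma T2eta (t : {ffun 'I_2 -> 'I_3}) : t = T2 (t ord0) (t ord_max).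
Proof.
apply/ffunP => -[[|[|m]] H]; rewrite ffunE //=; congr (t _); exact: val_inj.
Qed.
Lemma T3eta (t : {ffun 'I_3 -> 'I_3}) : t = T3 (t ord0) (t (inord 1)) (t ord_max).
Proof.
apply/ffunP => -[[|[|[|m]]] H]; rewrite ffunE //=; congr (t _); apply: val_inj => //=.
by rewrite inordK.
Qed.
Lemma T1eta (t : {ffun 'I_1 -> 'I_3}) : t = T1 (t ord0).
Proof. by apply/ffunP => -[[|m] H]; rewrite ffunE //=; congr (t _); exact: val_inj. Qed.

Lemma qopE00 : qop o0 o0 = o0. Proof. by apply: val_inj; rewrite /= inordK. Qed.
Lemma qopE01 : qop o0 o1 = o0. Proof. by apply: val_inj; rewrite /= inordK. Qed.
Lemma qopE02 : qop o0 o2 = o0. Proof. by apply: val_inj; rewrite /= inordK. Qed.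
Lemma qopE10 : qop o1 o0 = o2. Proof. by apply: val_inj; rewrite /= inordK. Qed.
Lemma qopE11 : qop o1 o1 = o1. Proof. by apply: val_inj; rewrite /= inordK. Qed.
Lemma qopE12 : qop o1 o2 = o1. Proof. by apply: val_inj; rewrite /= inordK. Qed.
Lemma qopE20 : qop o2 o0 = o1. Proof. by apply: val_inj; rewrite /= inordK. Qed.
Lemma qopE21 : qop o2 o1 = o2. Proof. by apply: val_inj; rewrite /= inordK. Qed.
Lemma qopE22 : qop o2 o2 = o2. Proof. by apply: val_inj; rewrite /= inordK. Qed.
Definition qopE := (qopE00, qopE01, qopE02, qopE10, qopE11, qopE12, qopE20, qopE21, qopE22).

Lemma cobound_T3 (f : {ffun 'I_2 -> 'I_3} -> int) x1 x2 x3 :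
  cobound _ qop f (T3 x1 x2 x3) =
  f (T2 x1 x3) - f (T2 (qop x1 x2) x3) - f (T2 x1 x2) + f (T2 (qop x1 x3) (qop x2 x3)).
Proof.
rewrite /cobound big_mkcond !big_ord_recl big_ord0 /=.
have -> : face _ (lift ord0 ord0) (T3 x1 x2 x3) = T2 x1 x3.
  by apply/ffunP => -[[|[|m]] H]; rewrite !ffunE.
have -> : tface _ qop (lift ord0 ord0) (T3 x1 x2 x3) = T2 (qop x1 x2) x3.
  by apply/ffunP => -[[|[|m]] H]; rewrite !ffunE.
have -> : face _ (lift ord0 (lift ord0 ord0)) (T3 x1 x2 x3) = T2 x1 x2.
  by apply/ffunP => -[[|[|m]] H]; rewrite !ffunE.
have -> : tface _ qop (lift ord0 (lift ord0 ord0)) (T3 x1 x2 x3) = T2 (qop x1 x3) (qop x2 x3).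
  by apply/ffunP => -[[|[|m]] H]; rewrite !ffunE.
rewrite /=; ring.
Qed.

Lemma cobound_T2 (g : {ffun 'I_1 -> 'I_3} -> int) x1 x2 :
  cobound _ qop g (T2 x1 x2) = g (T1 x1) - g (T1 (qop x1 x2)).
Proof.
rewrite /cobound big_mkcond !big_ord_recl big_ord0 /=.
have -> : face _ (lift ord0 ord0) (T2 x1 x2) = T1 x1.
  by apply/ffunP => -[[|m] H]; rewrite !ffunE.
have -> : tface _ qop (lift ord0 ord0) (T2 x1 x2) = T1 (qop x1 x2).
  by apply/ffunP => -[[|m] H]; rewrite !ffunE.
by rewrite expr2 mulrNN !mul1r add0r addr0.
Qed.

Lemma vertex_inj n : injective (@vertex n).
Proof.
move=> i j /matrixP /(_ ord0 i); rewrite !mxE eqxx.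
case: eqP => // _ /eqP; rewrite mulr0n mulr1n => /eqP H; exfalso; move: H; lra.
Qed.

Lemma all_real n (t : {ffun 'I_n.+1 -> 'I_3}) : realizable (indiscrete_open 'I_3) t.
Proof.
exists (fun v => if [pick i | v == vertex i] is Some i then t i else t ord0); split.
  move=> U [->|->].
    by exists set0; rewrite preimage_set0; split => //; exact: open0.
  by exists setT; rewrite preimage_setT; split => //; exact: openT.
move=> i; case: pickP => [j /eqP/vertex_inj -> //|/(_ i)]; by rewrite eqxx.
Qed.

Lemma nondeg2 (t : {ffun 'I_2 -> 'I_3}) : degenerate t -> t ord0 = t ord_max.
Proof.
move=> [[[|[|?]] Hi] [[[|[|?]] Hj] [//= _ E]]].
have -> : (ord0 : 'I_2) = Ordinal Hi by apply: val_inj.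
have -> : (ord_max : 'I_2) = Ordinal Hj by apply: val_inj.
exact: E.
Qed.

Lemma nondeg1 (t : {ffun 'I_1 -> 'I_3}) : ~ degenerate t.
Proof. by move=> [[[|?] Hi] [[[|?] Hj] [] //]]. Qed.

Lemma deg2 x : degenerate (T2 x x).
Proof. by exists ord0, ord_max; rewrite !ffunE. Qed.

Definition fz (z : int * int) (t : {ffun 'I_2 -> 'I_3}) : int :=
  match nat_of_ord (t ord0), nat_of_ord (t ord_max) with
  | 0, 1 | 0, 2 => z.1
  | 1, 0 => z.2
  | _, _ => 0
  end%N.

Lemma T2E0 x y : T2 x y ord0 = x. Proof. by rewrite ffunE. Qed.
Lemma T2E1 x y : T2 x y ord_max = y. Proof. by rewrite ffunE. Qed.

Theorem mainTheorem16 : H_Q_iso_Z2 QY qop (indiscrete_open QY) 0.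
Proof.
pose phi (f : {ffun 'I_2 -> 'I_3} -> int) : int * int :=
  (f (T2 o0 o1), f (T2 o1 o0) + f (T2 o2 o0)).
have cocy : forall f, cocycleQ QY qop (indiscrete_open QY) 1 f ->
   [/\ forall x, f (T2 x x) = 0, f (T2 o1 o2) = 0, f (T2 o2 o1) = 0 &
       f (T2 o0 o2) = f (T2 o0 o1)].
  move=> f [ch co]; have dz x : f (T2 x x) = 0 by apply: ch; right; exact: deg2.
  have c t1 t2 t3 := co (T3 t1 t2 t3) (all_real _ _).
  move: (c o0 o1 o0) (c o1 o0 o1) (c o1 o0 o2).
  rewrite !cobound_T3 !qopE !dz; split => //; lia.
exists phi; split; [|split].
- move=> f g _ _; rewrite /phi /=.
  transitivity ((f (T2 o0 o1) + g (T2 o0 o1),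
     (f (T2 o1 o0) + f (T2 o2 o0)) + (g (T2 o1 o0) + g (T2 o2 o0))) : int * int);
    last by [].
  congr pair; ring.
- move=> z; exists (fz z); split; last by rewrite /phi /fz !T2E0 !T2E1 /= addr0; case: z.
  split.
    move=> t [/(_ (all_real _ _))//|/nondeg2]; rewrite /fz => ->.
    by case: (t ord_max) => [[|[|[|?]]] ?].
  move=> t _; rewrite (T3eta t).
  case: (I3cases (t ord0)) => [->|[->|->]];
  case: (I3cases (t (inord 1))) => [->|[->|->]];
  case: (I3cases (t ord_max)) => [->|[->|->]];
  rewrite cobound_T3 !qopE /fz !T2E0 !T2E1 /=; ring.
- move=> f cf; have [dz e12 e21 e02] := cocy f cf; split.
    case=> e01 e10.
    exists (fun t => if t ord0 == o1 then f (T2 o1 o0) else 0); split.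
      by move=> t [/(_ (all_real _ _))//|/nondeg1].
    move=> t _; rewrite [in LHS](T2eta t) (T2eta t) cobound_T2 !ffunE.
    case: (I3cases (t ord0)) => [->|[->|->]];
    case: (I3cases (t ord_max)) => [->|[->|->]];
    rewrite ?dz ?qopE //= ?e12 ?e21 ?e02 ?e01; lia.
  case=> g [_ cg]; rewrite /phi !(cg _ (all_real _ _)) !cobound_T2 !qopE.
  congr pair; ring.
Qed.
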